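(* Let $I$ be an index set and $P_r,Q_r\in GL(n,\mathbb C)$ for $r\in I$. There exists a biholomorphic map $f\colon\mathbb C^n\to\mathbb C^n$ with $f(P_rw)=Q_rf(w)$ for all $w\in\mathbb C^n$, $r\in I$, if and only if there exists $C\in GL(n,\mathbb C)$ with $CP_r=Q_rC$ for all $r\in I$. *)

(* Defs.v *)
From Stdlib Require Import Reals Arith.
Open Scope R_scope.

Definition C : Type := (R * R)%type.
Definition C0 : C := (0, 0).
Definition C1 : C := (1, 0).
Definition Cadd (a b : C) : C := (fst a + fst b, snd a + snd b).
Definition Copp (a : C) : C := (- fst a, - snd a).
Definition Cmul (a b : C) : C :=
  (fst a * fst b - snd a * snd b, fst a * snd b + snd a * fst b).
Definition Cnorm (a : C) : R := sqrt (fst a ^ 2 + snd a ^ 2).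

Definition idx (n : nat) : Type := {i : nat | (i < n)%nat}.
Definition vec (n : nat) : Type := idx n -> C.
Definition mat (n : nat) : Type := idx n -> idx n -> C.

Fixpoint Csum (k : nat) (g : nat -> C) : C :=
  match k with O => C0 | S k' => Cadd (Csum k' g) (g k') end.
Fixpoint Rsum (k : nat) (g : nat -> R) : R :=
  match k with O => 0 | S k' => Rsum k' g + g k' end.

Definition Csum_idx (n : nat) (g : idx n -> C) : C :=
  Csum n (fun j => match lt_dec j n with
                   | left h => g (exist _ j h)
                   | right _ => C0 end).
Definition Rsum_idx (n : nat) (g : idx n -> R) : R :=
  Rsum n (fun j => match lt_dec j n with
                   | left h => g (exist _ j h)
                   | right _ => 0 end).

Definition vadd {n} (v w : vec n) : vec n := fun i => Cadd (v i) (w i).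
Definition vsub {n} (v w : vec n) : vec n := fun i => Cadd (v i) (Copp (w i)).
(** Norm on C^n (l^1 norm; all norms on C^n are equivalent). *)
Definition vnorm {n} (v : vec n) : R := Rsum_idx n (fun i => Cnorm (v i)).

Definition mat_vec {n} (M : mat n) (w : vec n) : vec n :=
  fun i => Csum_idx n (fun j => Cmul (M i j) (w j)).
Definition mat_mul {n} (A B : mat n) : mat n :=
  fun i k => Csum_idx n (fun j => Cmul (A i j) (B j k)).
Definition mat_id (n : nat) : mat n :=
  fun i j => if Nat.eqb (proj1_sig i) (proj1_sig j) then C1 else C0.

Definition GL (n : nat) (A : mat n) : Prop :=
  exists B : mat n, mat_mul A B = mat_id n /\ mat_mul B A = mat_id n.

(** f : C^n -> C^n is complex (Frechet) differentiable at z, with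
    complex-linear derivative given by the matrix L. *)
Definition C_diff_at {n} (f : vec n -> vec n) (z : vec n) (L : mat n) : Prop :=
  forall eps, 0 < eps -> exists delta, 0 < delta /\
    forall h : vec n, vnorm h < delta ->
      vnorm (vsub (vsub (f (vadd z h)) (f z)) (mat_vec L h)) <= eps * vnorm h.

Definition holomorphic {n} (f : vec n -> vec n) : Prop :=
  forall z : vec n, exists L : mat n, C_diff_at f z L.

Definition biholomorphic {n} (f : vec n -> vec n) : Prop :=
  holomorphic f /\ exists g : vec n -> vec n,
    holomorphic g /\ (forall w, g (f w) = w) /\ (forall w, f (g w) = w).

(* Main.v *)
Require Import Defs.
From Stdlib Require Import Reals Arith Lra Lia Psatz FunctionalExtensionality.
Open Scope R_scope.
Import Defs.

Lemma C_eq (a b : C) : fst a = fst b -> snd a = snd b -> a = b.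
Proof. destruct a, b; simpl; intros; subst; reflexivity. Qed.

Ltac Csolve := apply C_eq; unfold Cadd, Cmul, Copp, C0, C1; simpl; ring.

Lemma idx_eq n (a b : idx n) : proj1_sig a = proj1_sig b -> a = b.
Proof. destruct a as [a ha], b as [b hb]; simpl; intros; subst; f_equal; apply Peano_dec.le_unique. Qed.

Lemma Csum_ext k g h : (forall j, (j < k)%nat -> g j = h j) -> Csum k g = Csum k h.
Proof. induction k; simpl; intros H; auto. rewrite IHk by (intros; apply H; lia). rewrite H by lia; auto. Qed.
Lemma Csum_add k g h : Csum k (fun j => Cadd (g j) (h j)) = Cadd (Csum k g) (Csum k h).
Proof. induction k; simpl. Csolve. rewrite IHk. Csolve. Qed.
Lemma Csum_opp k g : Csum k (fun j => Copp (g j)) = Copp (Csum k g).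
Proof. induction k; simpl. Csolve. rewrite IHk. Csolve. Qed.
Lemma Csum_mul_l k a g : Csum k (fun j => Cmul a (g j)) = Cmul a (Csum k g).
Proof. induction k; simpl. Csolve. rewrite IHk. Csolve. Qed.
Lemma Csum_mul_r k a g : Csum k (fun j => Cmul (g j) a) = Cmul (Csum k g) a.
Proof. induction k; simpl. Csolve. rewrite IHk. Csolve. Qed.
Lemma Csum_zero k g : (forall j, (j < k)%nat -> g j = C0) -> Csum k g = C0.
Proof. induction k; simpl; intros H; auto. rewrite IHk by (intros; apply H; lia). rewrite H by lia. Csolve. Qed.
Lemma Csum_swap k m (g : nat -> nat -> C) :
  Csum k (fun i => Csum m (fun j => g i j)) = Csum m (fun j => Csum k (fun i => g i j)).
Proof. induction k; simpl. symmetry; apply Csum_zero; auto. rewrite IHk, <- Csum_add. reflexivity. Qed.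
Lemma Csum_delta k g j : (j < k)%nat -> (forall i, (i < k)%nat -> i <> j -> g i = C0) -> Csum k g = g j.
Proof.
  induction k; intros Hj H; [lia|]. simpl.
  destruct (Nat.eq_dec j k).
  - subst. rewrite Csum_zero by (intros; apply H; lia). Csolve.
  - rewrite IHk by (try lia; intros; apply H; lia). rewrite (H k) by lia. Csolve.
Qed.

Lemma Csum_idx_add n g h : Csum_idx n (fun j => Cadd (g j) (h j)) = Cadd (Csum_idx n g) (Csum_idx n h).
Proof. unfold Csum_idx; rewrite <- Csum_add; apply Csum_ext; intros; destruct (lt_dec j n); [reflexivity|Csolve]. Qed.
Lemma Csum_idx_opp n g : Csum_idx n (fun j => Copp (g j)) = Copp (Csum_idx n g).
Proof. unfold Csum_idx; rewrite <- Csum_opp; apply Csum_ext; intros; destruct (lt_dec j n); [reflexivity|Csolve]. Qed.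
Lemma Csum_idx_mul_l n a g : Csum_idx n (fun j => Cmul a (g j)) = Cmul a (Csum_idx n g).
Proof. unfold Csum_idx; rewrite <- Csum_mul_l; apply Csum_ext; intros; destruct (lt_dec j n); [reflexivity|Csolve]. Qed.
Lemma Csum_idx_mul_r n a g : Csum_idx n (fun j => Cmul (g j) a) = Cmul (Csum_idx n g) a.
Proof. unfold Csum_idx; rewrite <- Csum_mul_r; apply Csum_ext; intros; destruct (lt_dec j n); [reflexivity|Csolve]. Qed.
Lemma Csum_idx_zero n g : (forall j, g j = C0) -> Csum_idx n g = C0.
Proof. intros H; unfold Csum_idx; apply Csum_zero; intros; destruct (lt_dec j n); auto. Qed.
Lemma Csum_idx_swap n (g : idx n -> idx n -> C) :
  Csum_idx n (fun i => Csum_idx n (fun j => g i j)) = Csum_idx n (fun j => Csum_idx n (fun i => g i j)).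
Proof.
  unfold Csum_idx.
  transitivity (Csum n (fun i => Csum n (fun j => match lt_dec i n with left hi => match lt_dec j n with left hj => g (exist _ i hi) (exist _ j hj) | right _ => C0 end | right _ => C0 end))).
  { apply Csum_ext; intros i hi; destruct (lt_dec i n); [reflexivity|]. symmetry; apply Csum_zero; auto. }
  rewrite Csum_swap. apply Csum_ext; intros j hj; destruct (lt_dec j n).
  - apply Csum_ext; intros i hi; destruct (lt_dec i n); reflexivity.
  - apply Csum_zero; intros i _; destruct (lt_dec i n); reflexivity.
Qed.
Lemma Csum_idx_delta n (g : idx n -> C) (j : idx n) : (forall i, i <> j -> g i = C0) -> Csum_idx n g = g j.
Proof.
  intros H. unfold Csum_idx. destruct j as [j hj].
  rewrite (Csum_delta _ _ j hj).
  - destruct (lt_dec j n); [|lia]. f_equal; apply idx_eq; reflexivity.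
  - intros i hi Hij. destruct (lt_dec i n); auto. apply H. intros E; apply Hij. inversion E; auto.
Qed.

Lemma Rsum_ext k g h : (forall j, (j < k)%nat -> g j = h j) -> Rsum k g = Rsum k h.
Proof. induction k; simpl; intros H; auto. rewrite IHk by (intros; apply H; lia). rewrite H by lia; auto. Qed.
Lemma Rsum_le k g h : (forall j, (j < k)%nat -> g j <= h j) -> Rsum k g <= Rsum k h.
Proof. induction k; simpl; intros H. lra. assert (g k <= h k) by (apply H; lia). assert (Rsum k g <= Rsum k h) by (apply IHk; intros; apply H; lia). lra. Qed.
Lemma Rsum_add k g h : Rsum k (fun j => g j + h j) = Rsum k g + Rsum k h.
Proof. induction k; simpl. ring. rewrite IHk. ring. Qed.
Lemma Rsum_mul_r k a g : Rsum k (fun j => g j * a) = Rsum k g * a.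
Proof. induction k; simpl. ring. rewrite IHk. ring. Qed.
Lemma Rsum_nonneg k g : (forall j, (j < k)%nat -> 0 <= g j) -> 0 <= Rsum k g.
Proof. intros H. replace 0 with (Rsum k (fun _ => 0)). apply Rsum_le; auto. induction k; simpl; auto. rewrite IHk; [ring|intros; apply H; lia]. Qed.
Lemma Rsum_term k g j : (j < k)%nat -> (forall i, (i < k)%nat -> 0 <= g i) -> g j <= Rsum k g.
Proof.
  induction k; intros Hj H; [lia|]. simpl.
  destruct (Nat.eq_dec j k).
  - subst. assert (0 <= Rsum k g) by (apply Rsum_nonneg; intros; apply H; lia). lra.
  - assert (g j <= Rsum k g) by (apply IHk; [lia|intros; apply H; lia]). assert (0 <= g k) by (apply H; lia). lra.
Qed.

Lemma Rsum_idx_le n g h : (forall j, g j <= h j) -> Rsum_idx n g <= Rsum_idx n h.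
Proof. intros H; unfold Rsum_idx; apply Rsum_le; intros; destruct (lt_dec j n); auto; lra. Qed.
Lemma Rsum_idx_add n g h : Rsum_idx n (fun j => g j + h j) = Rsum_idx n g + Rsum_idx n h.
Proof. unfold Rsum_idx; rewrite <- Rsum_add; apply Rsum_ext; intros; destruct (lt_dec j n); [reflexivity|ring]. Qed.
Lemma Rsum_idx_mul_r n a g : Rsum_idx n (fun j => g j * a) = Rsum_idx n g * a.
Proof. unfold Rsum_idx; rewrite <- Rsum_mul_r; apply Rsum_ext; intros; destruct (lt_dec j n); [reflexivity|ring]. Qed.
Lemma Rsum_idx_nonneg n g : (forall j, 0 <= g j) -> 0 <= Rsum_idx n g.
Proof. intros H; unfold Rsum_idx; apply Rsum_nonneg; intros; destruct (lt_dec j n); auto; lra. Qed.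
Lemma Rsum_idx_term n g j : (forall i, 0 <= g i) -> g j <= Rsum_idx n g.
Proof.
  intros H; unfold Rsum_idx. destruct j as [j hj].
  eapply Rle_trans; [|apply (Rsum_term _ _ j hj)].
  - cbv beta. destruct (lt_dec j n); [|lia]. right; f_equal; apply idx_eq; reflexivity.
  - intros i _; destruct (lt_dec i n); auto; lra.
Qed.
Lemma Rsum_idx_zero n : Rsum_idx n (fun _ => 0) = 0.
Proof. unfold Rsum_idx. rewrite (Rsum_ext _ _ (fun _ => 0)) by (intros; destruct (lt_dec j n); auto).
  induction n; simpl; auto. rewrite IHn; ring. Qed.

Lemma Cnorm_nonneg a : 0 <= Cnorm a.
Proof. apply sqrt_pos. Qed.
Lemma Cnorm_C0 : Cnorm C0 = 0.
Proof. unfold Cnorm, C0; simpl. transitivity (sqrt 0). f_equal; ring. apply sqrt_0. Qed.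
Lemma Cnorm_triangle a b : Cnorm (Cadd a b) <= Cnorm a + Cnorm b.
Proof.
  destruct a as [x y], b as [u v]; unfold Cnorm, Cadd; cbn [fst snd].
  set (A := x^2+y^2). set (B := u^2+v^2).
  assert (HA : 0 <= A) by (unfold A; apply Rplus_le_le_0_compat; apply pow2_ge_0). assert (HB : 0 <= B) by (unfold B; apply Rplus_le_le_0_compat; apply pow2_ge_0).
  assert (HS : sqrt A * sqrt B >= x*u + y*v).
  { rewrite <- sqrt_mult by auto.
    destruct (Rle_or_lt (x*u+y*v) 0). assert (0 <= sqrt (A*B)) by apply sqrt_pos. lra.
    apply Rle_ge. rewrite <- (sqrt_Rsqr (x*u+y*v)) by lra. apply sqrt_le_1_alt.
    unfold Rsqr, A, B.
    assert (E: (x^2+y^2)*(u^2+v^2) - (x*u+y*v)*(x*u+y*v) = (x*v-y*u)*(x*v-y*u)) by ring.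
    assert (0 <= (x*v-y*u)*(x*v-y*u)) by apply Rle_0_sqr. lra. }
  apply Rsqr_incr_0_var. 2:{ pose proof (sqrt_pos A); pose proof (sqrt_pos B); lra. }
  rewrite Rsqr_sqrt by (apply Rplus_le_le_0_compat; apply pow2_ge_0). unfold Rsqr.
  replace ((sqrt A + sqrt B) * (sqrt A + sqrt B)) with (sqrt A * sqrt A + sqrt B * sqrt B + 2 * (sqrt A * sqrt B)) by ring.
  rewrite !sqrt_sqrt by auto.
  assert (E: (x+u)^2 + (y+v)^2 = A + B + 2*(x*u+y*v)) by (unfold A, B; ring). lra.
Qed.
Lemma Cnorm_mul a b : Cnorm (Cmul a b) = Cnorm a * Cnorm b.
Proof.
  destruct a as [x y], b as [u v]; unfold Cnorm, Cmul; simpl.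
  rewrite <- sqrt_mult by nra. f_equal. ring.
Qed.
Lemma Cnorm_opp a : Cnorm (Copp a) = Cnorm a.
Proof. destruct a; unfold Cnorm, Copp; simpl. f_equal; ring. Qed.
Lemma Cnorm_zero a : Cnorm a = 0 -> a = C0.
Proof.
  destruct a as [x y]; unfold Cnorm, C0; simpl. intros H. apply sqrt_eq_0 in H; [|nra].
  assert (x = 0) by nra. assert (y = 0) by nra. subst; auto.
Qed.
Lemma Cnorm_real t a : Cnorm (Cmul (t, 0) a) = Rabs t * Cnorm a.
Proof. rewrite Cnorm_mul. f_equal. unfold Cnorm; simpl. rewrite <- sqrt_Rsqr_abs. f_equal. unfold Rsqr; ring. Qed.

Lemma Cnorm_Csum k g : Cnorm (Csum k g) <= Rsum k (fun j => Cnorm (g j)).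
Proof. induction k; simpl. rewrite Cnorm_C0; lra. eapply Rle_trans. apply Cnorm_triangle. lra. Qed.
Lemma Cnorm_Csum_idx n g : Cnorm (Csum_idx n g) <= Rsum_idx n (fun j => Cnorm (g j)).
Proof. unfold Csum_idx, Rsum_idx. eapply Rle_trans. apply Cnorm_Csum. right; apply Rsum_ext; intros; destruct (lt_dec j n); auto. apply Cnorm_C0. Qed.
Definition z0 {n} : vec n := fun _ => C0.
Definition vscal {n} (t : R) (v : vec n) : vec n := fun i => Cmul (t, 0) (v i).
Definition msub {n} (A B : mat n) : mat n := fun i j => Cadd (A i j) (Copp (B i j)).

Lemma vnorm_nonneg {n} (v : vec n) : 0 <= vnorm v.
Proof. apply Rsum_idx_nonneg; intros; apply Cnorm_nonneg. Qed.
Lemma vnorm_z0 {n} : vnorm (@z0 n) = 0.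
Proof. unfold vnorm, z0. rewrite Cnorm_C0. apply Rsum_idx_zero. Qed.
Lemma vnorm_add {n} (u v : vec n) : vnorm (vadd u v) <= vnorm u + vnorm v.
Proof. unfold vnorm, vadd. rewrite <- Rsum_idx_add. apply Rsum_idx_le; intros; apply Cnorm_triangle. Qed.
Lemma vnorm_sub {n} (u v : vec n) : vnorm (vsub u v) <= vnorm u + vnorm v.
Proof. unfold vnorm, vsub. rewrite <- Rsum_idx_add. apply Rsum_idx_le; intros.
  eapply Rle_trans. apply Cnorm_triangle. rewrite Cnorm_opp. lra. Qed.
Lemma vnorm_scal {n} t (v : vec n) : vnorm (vscal t v) = Rabs t * vnorm v.
Proof. unfold vnorm, vscal. rewrite Rmult_comm, <- Rsum_idx_mul_r. f_equal. extensionality i. rewrite Cnorm_real. ring. Qed.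
Lemma vnorm_comp {n} (v : vec n) i : Cnorm (v i) <= vnorm v.
Proof. apply (Rsum_idx_term n (fun i => Cnorm (v i)) i); intros; apply Cnorm_nonneg. Qed.
Lemma vnorm_zero {n} (v : vec n) : vnorm v = 0 -> v = z0.
Proof. intros H. extensionality i. apply Cnorm_zero. pose proof (vnorm_comp v i). pose proof (Cnorm_nonneg (v i)). lra. Qed.

Lemma mat_bound {n} (M : mat n) : exists K, 0 <= K /\ forall v, vnorm (mat_vec M v) <= K * vnorm v.
Proof.
  exists (Rsum_idx n (fun i => Rsum_idx n (fun j => Cnorm (M i j)))). split.
  - apply Rsum_idx_nonneg; intros; apply Rsum_idx_nonneg; intros; apply Cnorm_nonneg.
  - intros v. unfold vnorm at 1, mat_vec. rewrite <- Rsum_idx_mul_r. apply Rsum_idx_le; intros i.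
    eapply Rle_trans. apply Cnorm_Csum_idx. rewrite <- Rsum_idx_mul_r. apply Rsum_idx_le; intros j.
    rewrite Cnorm_mul. apply Rmult_le_compat_l. apply Cnorm_nonneg. apply vnorm_comp.
Qed.

Lemma mat_vec_add {n} (M : mat n) u v : mat_vec M (vadd u v) = vadd (mat_vec M u) (mat_vec M v).
Proof. extensionality i. unfold mat_vec, vadd. rewrite <- Csum_idx_add. f_equal. extensionality j. Csolve. Qed.
Lemma mat_vec_sub {n} (M : mat n) u v : mat_vec M (vsub u v) = vsub (mat_vec M u) (mat_vec M v).
Proof. extensionality i. unfold mat_vec, vsub. rewrite <- Csum_idx_opp, <- Csum_idx_add. f_equal. extensionality j. Csolve. Qed.
Lemma mat_vec_scal {n} (M : mat n) t v : mat_vec M (vscal t v) = vscal t (mat_vec M v).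
Proof. extensionality i. unfold mat_vec, vscal. rewrite <- Csum_idx_mul_l. f_equal. extensionality j. Csolve. Qed.
Lemma mat_vec_z0 {n} (M : mat n) : mat_vec M z0 = z0.
Proof. extensionality i. unfold mat_vec, z0. apply Csum_idx_zero. intros; Csolve. Qed.
Lemma mat_vec_msub {n} (A B : mat n) h : mat_vec (msub A B) h = vsub (mat_vec A h) (mat_vec B h).
Proof. extensionality i. unfold mat_vec, vsub, msub. rewrite <- Csum_idx_opp, <- Csum_idx_add. f_equal. extensionality j. Csolve. Qed.
Lemma mat_vec_mul {n} (A B : mat n) v : mat_vec (mat_mul A B) v = mat_vec A (mat_vec B v).
Proof.
  extensionality i. unfold mat_vec, mat_mul.
  transitivity (Csum_idx n (fun k => Csum_idx n (fun j => Cmul (A i j) (Cmul (B j k) (v k))))).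
  - f_equal; extensionality k. rewrite <- Csum_idx_mul_r. f_equal; extensionality j. Csolve.
  - rewrite Csum_idx_swap. f_equal; extensionality j. rewrite <- Csum_idx_mul_l. reflexivity.
Qed.
Lemma mat_vec_id {n} (v : vec n) : mat_vec (mat_id n) v = v.
Proof.
  extensionality i. unfold mat_vec, mat_id. rewrite (Csum_idx_delta _ _ i).
  - rewrite Nat.eqb_refl. Csolve.
  - intros j Hj. destruct (Nat.eqb_spec (proj1_sig i) (proj1_sig j)).
    + exfalso; apply Hj; apply idx_eq; auto.
    + Csolve.
Qed.
Lemma mat_zero {n} (A B : mat n) : (forall h, mat_vec (msub A B) h = z0) -> A = B.
Proof.
  intros H. extensionality i. extensionality j.
  set (e := fun k : idx n => if Nat.eqb (proj1_sig k) (proj1_sig j) then C1 else C0).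
  assert (E := f_equal (fun v => v i) (H e)). simpl in E. unfold mat_vec, z0 in E.
  rewrite (Csum_idx_delta _ _ j) in E.
  - unfold e in E. rewrite Nat.eqb_refl in E. unfold msub in E.
    assert (F1 := f_equal fst E); assert (F2 := f_equal snd E).
    unfold Cmul, Cadd, Copp, C1, C0 in *; simpl in *. apply C_eq; lra.
  - intros k Hk. unfold e. destruct (Nat.eqb_spec (proj1_sig k) (proj1_sig j)).
    + exfalso; apply Hk; apply idx_eq; auto.
    + Csolve.
Qed.
Lemma diff_linear {n} (M : mat n) z : C_diff_at (mat_vec M) z M.
Proof.
  intros eps Heps. exists 1. split; [lra|]. intros h _.
  replace (vsub (vsub (mat_vec M (vadd z h)) (mat_vec M z)) (mat_vec M h)) with (@z0 n).
  - rewrite vnorm_z0. pose proof (vnorm_nonneg h). nra.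
  - rewrite mat_vec_add. extensionality i. unfold z0, vsub, vadd. Csolve.
Qed.

Lemma diff_unique {n} (f : vec n -> vec n) z L1 L2 : C_diff_at f z L1 -> C_diff_at f z L2 -> L1 = L2.
Proof.
  intros H1 H2. apply mat_zero. intros h. apply vnorm_zero.
  set (M := msub L1 L2).
  assert (Hb : forall eps, 0 < eps -> vnorm (mat_vec M h) <= eps * (vnorm h + 1)).
  { intros eps Heps.
    destruct (H1 (eps/2)) as [d1 [Hd1 P1]]; [lra|].
    destruct (H2 (eps/2)) as [d2 [Hd2 P2]]; [lra|].
    pose proof (vnorm_nonneg h) as Hh.
    set (t := Rmin d1 d2 / (vnorm h + 1)).
    assert (Hm : 0 < Rmin d1 d2) by (apply Rmin_pos; auto).
    assert (Ht : 0 < t) by (unfold t; apply Rdiv_lt_0_compat; lra).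
    assert (Hth : t * vnorm h < Rmin d1 d2).
    { unfold t. apply (Rmult_lt_reg_r (vnorm h + 1)); [lra|].
      field_simplify; [|lra]. nra. }
    set (ht := vscal t h).
    assert (Nht : vnorm ht = t * vnorm h) by (unfold ht; rewrite vnorm_scal, Rabs_pos_eq; lra).
    pose proof (Rmin_l d1 d2); pose proof (Rmin_r d1 d2).
    specialize (P1 ht ltac:(lra)). specialize (P2 ht ltac:(lra)).
    assert (E : mat_vec M ht = vsub (vsub (vsub (f (vadd z ht)) (f z)) (mat_vec L2 ht))
                                     (vsub (vsub (f (vadd z ht)) (f z)) (mat_vec L1 ht))).
    { unfold M. rewrite mat_vec_msub. extensionality i. unfold vsub. Csolve. }
    pose proof (vnorm_sub (vsub (vsub (f (vadd z ht)) (f z)) (mat_vec L2 ht))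
                          (vsub (vsub (f (vadd z ht)) (f z)) (mat_vec L1 ht))) as T.
    rewrite <- E in T. unfold ht in T at 1. rewrite mat_vec_scal, vnorm_scal, Rabs_pos_eq in T by lra.
    rewrite Nht in P1, P2.
    assert (t * vnorm (mat_vec M h) <= t * (eps * vnorm h)) by lra.
    apply Rmult_le_reg_l in H3; [|lra]. nra. }
  pose proof (vnorm_nonneg (mat_vec M h)). pose proof (vnorm_nonneg h).
  destruct (Rle_lt_or_eq_dec 0 _ H); [|auto].
  specialize (Hb (vnorm (mat_vec M h) / (2 * (vnorm h + 1)))).
  assert (vnorm (mat_vec M h) / (2 * (vnorm h + 1)) * (vnorm h + 1) = vnorm (mat_vec M h) / 2) by (field; lra).
  assert (0 < vnorm (mat_vec M h) / (2 * (vnorm h + 1))) by (apply Rdiv_lt_0_compat; lra).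
  specialize (Hb H4). lra.
Qed.

Lemma diff_chain {n} (f g : vec n -> vec n) z D E :
  C_diff_at f z D -> C_diff_at g (f z) E -> C_diff_at (fun w => g (f w)) z (mat_mul E D).
Proof.
  intros Hf Hg eps Heps.
  destruct (mat_bound D) as [KD [HKD BD]]. destruct (mat_bound E) as [KE [HKE BE]].
  set (e1 := Rmin 1 (eps / (2 * (KE + 1)))).
  set (e2 := eps / (2 * (KD + 2))).
  assert (He1 : 0 < e1) by (unfold e1; apply Rmin_pos; [lra| apply Rdiv_lt_0_compat; lra]).
  assert (He2 : 0 < e2) by (unfold e2; apply Rdiv_lt_0_compat; lra).
  destruct (Hf e1 He1) as [d1 [Hd1 P1]]. destruct (Hg e2 He2) as [d2 [Hd2 P2]].
  exists (Rmin d1 (d2 / (KD + 2))). split.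
  { apply Rmin_pos; auto. apply Rdiv_lt_0_compat; lra. }
  intros h Hh.
  pose proof (Rmin_l d1 (d2 / (KD + 2))); pose proof (Rmin_r d1 (d2 / (KD + 2))).
  pose proof (vnorm_nonneg h) as Nh.
  set (k := vsub (f (vadd z h)) (f z)).
  set (r1 := vsub k (mat_vec D h)).
  assert (R1 : vnorm r1 <= e1 * vnorm h) by (apply P1; lra).
  assert (Hk : k = vadd r1 (mat_vec D h)) by (extensionality i; unfold r1, vadd, vsub; Csolve).
  assert (e1 <= 1) by apply Rmin_l.
  assert (Nk : vnorm k <= (KD + 1) * vnorm h).
  { rewrite Hk. eapply Rle_trans. apply vnorm_add. specialize (BD h). nra. }
  assert (Nk2 : vnorm k < d2).
  { assert ((KD + 2) * vnorm h < (KD+2) * (d2 / (KD + 2))) by (apply Rmult_lt_compat_l; lra).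
    replace ((KD+2) * (d2 / (KD + 2))) with d2 in H2 by (field; lra). nra. }
  specialize (P2 k Nk2).
  assert (Fk : vadd (f z) k = f (vadd z h)) by (extensionality i; unfold k, vadd, vsub; Csolve).
  rewrite Fk in P2.
  replace (vsub (vsub (g (f (vadd z h))) (g (f z))) (mat_vec (mat_mul E D) h))
    with (vadd (vsub (vsub (g (f (vadd z h))) (g (f z))) (mat_vec E k)) (mat_vec E r1)).
  2:{ rewrite mat_vec_mul. unfold r1. rewrite mat_vec_sub. extensionality i. unfold vadd, vsub. Csolve. }
  eapply Rle_trans. apply vnorm_add.
  specialize (BE r1).
  assert (A1 : e2 * vnorm k <= eps / 2 * vnorm h).
  { assert (e2 * (KD + 2) = eps / 2) by (unfold e2; field; lra).
    assert (e2 * vnorm k <= e2 * ((KD + 1) * vnorm h)) by (apply Rmult_le_compat_l; lra). nra. }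
  assert (A2 : KE * vnorm r1 <= eps / 2 * vnorm h).
  { assert (e1 <= eps / (2 * (KE + 1))) by apply Rmin_r.
    assert (KE * e1 <= eps / 2).
    { assert (KE * e1 <= KE * (eps / (2 * (KE + 1)))) by (apply Rmult_le_compat_l; lra).
      assert (KE * (eps / (2 * (KE + 1))) <= eps / 2).
      { unfold Rdiv. rewrite Rinv_mult. 
        assert (KE * / (KE + 1) <= 1).
        { apply (Rmult_le_reg_r (KE + 1)); [lra|]. rewrite Rmult_assoc, Rinv_l by lra. lra. }
        assert (0 < eps * / 2) by lra. nra. }
      lra. }
    assert (KE * vnorm r1 <= KE * (e1 * vnorm h)) by (apply Rmult_le_compat_l; lra). nra. }
  lra.
Qed.
Theorem theorem3p5 (n : nat) (I : Type) (P Q : I -> mat n)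
  (HP : forall r, GL n (P r)) (HQ : forall r, GL n (Q r)) :
  (exists f : vec n -> vec n, biholomorphic f /\
     forall (w : vec n) (r : I), f (mat_vec (P r) w) = mat_vec (Q r) (f w))
  <->
  (exists Cm : mat n, GL n Cm /\ forall r : I, mat_mul Cm (P r) = mat_mul (Q r) Cm).
Proof.
  split.
  - intros [f [[Hf [g [Hg [Hgf Hfg]]]] Heq]].
    destruct (Hf z0) as [D HD].
    destruct (Hg (f z0)) as [E HE].
    exists D. split.
    + exists E. split.
      *
        assert (HD' : C_diff_at f (g (f z0)) D) by (rewrite Hgf; exact HD).
        pose proof (diff_chain g f (f z0) E D HE HD') as H1.
        replace (fun w => f (g w)) with (mat_vec (mat_id n)) in H1.
        2:{ extensionality w. rewrite Hfg, mat_vec_id. reflexivity. }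
        symmetry; eapply diff_unique; [apply diff_linear|exact H1].
      * pose proof (diff_chain f g z0 D E HD HE) as H1.
        replace (fun w => g (f w)) with (mat_vec (mat_id n)) in H1.
        2:{ extensionality w. rewrite Hgf, mat_vec_id. reflexivity. }
        symmetry; eapply diff_unique; [apply diff_linear|exact H1].
    + intros r.
      assert (HD' : C_diff_at f (mat_vec (P r) z0) D) by (rewrite mat_vec_z0; exact HD).
      pose proof (diff_chain (mat_vec (P r)) f z0 (P r) D (diff_linear _ _) HD') as H1.
      pose proof (diff_chain f (mat_vec (Q r)) z0 D (Q r) HD (diff_linear _ _)) as H2.
      replace (fun w => f (mat_vec (P r) w)) with (fun w => mat_vec (Q r) (f w)) in H1.
      2:{ extensionality w. rewrite Heq. reflexivity. }
      eapply diff_unique; eauto.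
  - intros [Cm [[B [HCB HBC]] Hc]].
    exists (mat_vec Cm). split.
    + split. { intros z; exists Cm; apply diff_linear. }
      exists (mat_vec B). split. { intros z; exists B; apply diff_linear. }
      split; intros w; rewrite <- mat_vec_mul.
      * rewrite HBC; apply mat_vec_id.
      * rewrite HCB; apply mat_vec_id.
    + intros w r. rewrite <- !mat_vec_mul, Hc. reflexivity.
Qed.
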